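(* For every positive integer $n$ there exist integers $R$ and $m$ and a finite set $\Lambda\subset\mathbb{N}^m$ such that the following holds. If $G$ is a simply connected, simple, compact Lie group of rank $r\ge R$ and $\lambda$ is a dominant weight with $\chi_\lambda(1)\le r^n$, then either $G$ is of type $A_r$ and $$\lambda=a_1\varpi_1+\cdots+a_m\varpi_m+b_m\varpi_{r+1-m}+\cdots+b_1\varpi_r$$ for some $(a_1,\ldots,a_m),(b_1,\ldots,b_m)\in\Lambda$, or $G$ is of type $B_r$, $C_r$ or $D_r$ and $$\lambda=a_1\varpi_1+\cdots+a_m\varpi_m$$ for some $(a_1,\ldots,a_m)\in\Lambda$.
   Context: A compact Lie group is called simple if it is connected, has finite center, and is a simple group modulo its center. $\varpi_1,\ldots,\varpi_r$ are the fundamental weights, with simple roots numbered as in Bourbaki (for $A_r,B_r,C_r,D_r$, $\alpha_1$ is at the end of the Dynkin diagram away from the branch/double bond, $\alpha_i$ adjacent to $\alpha_{i+1}$). $\chi_\lambda$ denotes the irreducible character of $G$ with highest weight $\lambda$. $\mathbb{N}$ denotes the non-negative integers. *)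

(* Defs.v *)
From mathcomp Require Import all_boot all_order all_algebra.
Set Implicit Arguments. Unset Strict Implicit. Unset Printing Implicit Defensive.
Import Order.TTheory GRing.Theory Num.Theory.
Local Open Scope ring_scope.

(* Types of the classical simply connected simple compact Lie groups.
   (Exceptional types have rank <= 8.) *)
Inductive classical_type := TA | TB | TC | TD.

(* Standard (Bourbaki) realization of the root system in Q^N, N = ambient_dim,
   with orthonormal basis e_0, ..., e_(N-1). *)
Definition ambient_dim (t : classical_type) (r : nat) : nat :=
  if t is TA then r.+1 else r.

Definition vec := nat -> rat.

Definition eps (i : nat) : vec := fun x => (x == i)%:R.

Definition dotv (t : classical_type) (r : nat) (u v : vec) : rat :=
  \sum_(x < ambient_dim t r) u x * v x.

(* Fundamental weight varpi_(k+1) (0-indexed k), Bourbaki plates I-IV, in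
   e-coordinates.  For A_r we use e_1+...+e_k, which differs from Bourbaki's
   varpi_k by a multiple of e_1+...+e_(r+1), orthogonal to all roots. *)
Definition fundw (t : classical_type) (r k : nat) : vec := fun x =>
  match t with
  | TA | TC => if (x <= k)%N then 1 else 0
  | TB => if k.+1 == r then (if (x < r)%N then 1/2 else 0)
          else if (x <= k)%N then 1 else 0
  | TD => if k.+1 == r then (if (x < r)%N then 1/2 else 0)
          else if k.+2 == r then
            (if (x < r.-1)%N then 1/2 else if x == r.-1 then -(1/2) else 0)
          else if (x <= k)%N then 1 else 0
  end.

Definition ijpairs (N : nat) : seq (nat * nat) :=
  [seq (i, j) | i <- iota 0 N, j <- iota i.+1 (N - i.+1)].

Definition posroots (t : classical_type) (r : nat) : seq vec :=
  let P := ijpairs (ambient_dim t r) in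
  [seq (fun x => eps p.1 x - eps p.2 x) | p <- P]
  ++ (if t is TA then [::] else [seq (fun x => eps p.1 x + eps p.2 x) | p <- P])
  ++ (match t with
      | TB => [seq eps i | i <- iota 0 r]
      | TC => [seq (fun x => 2 * eps i x) | i <- iota 0 r]
      | _ => [::]
      end).

Definition weightv (t : classical_type) (r : nat) (c : 'I_r -> nat) : vec :=
  fun x => \sum_(k < r) (c k)%:R * fundw t r k x.

(* chi_lambda(1) for lambda = sum_k lam_k varpi_(k+1), by the Weyl dimension
   formula  prod_(alpha > 0) (lambda + rho, alpha) / (rho, alpha). *)
Definition weyl_dim (t : classical_type) (r : nat) (lam : 'I_r -> nat) : rat :=
  \prod_(al <- posroots t r)
     (dotv t r (@weightv t r (fun k => (lam k).+1)) al
      / dotv t r (@weightv t r (fun _ : 'I_r => 1%N)) al).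

(* Main.v *)
Require Import Defs.
From mathcomp Require Import all_boot all_order all_algebra.
From mathcomp Require Import zify ring lra.
Import Order.TTheory GRing.Theory Num.Theory.
Local Open Scope ring_scope.

Lemma prod_ge1 (I : Type) (s : seq I) (P : pred I) (F : I -> rat) :
  (forall i, P i -> 1 <= F i) -> 1 <= \prod_(i <- s | P i) F i.
Proof.
move=> H; apply: (big_ind (fun x => 1 <= x)) => //.
move=> x y hx hy; rewrite -[1]mulr1; apply: ler_pM => //; lra.
Qed.

Lemma prod_ge0 (I : Type) (s : seq I) (P : pred I) (F : I -> rat) :
  (forall i, P i -> 0 <= F i) -> 0 <= \prod_(i <- s | P i) F i.
Proof. by move=> H; apply: prodr_ge0. Qed.

Lemma le3 (x y z : rat) : 1 <= x -> 1 <= z -> 1 <= y -> y <= x * (y * z).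
Proof.
move=> hx hz hy; have h : y <= y * z by rewrite ler_peMr //; lra.
apply: le_trans h _; rewrite ler_peMl //; apply: mulr_ge0; lra.
Qed.

Lemma prod_sub (X : nat -> rat) a b N :
  (forall i, (i < N)%N -> 1 <= X i) -> (a <= b)%N -> (b <= N)%N ->
  \prod_(a <= i < b) X i <= \prod_(0 <= i < N) X i.
Proof.
move=> H hab hbN.
rewrite (big_cat_nat (leq0n a) (leq_trans hab hbN)) (big_cat_nat hab hbN) /=.
have h1 : 1 <= \prod_(0 <= i < a) X i.
  rewrite big_nat_cond; apply: prod_ge1 => i /andP[/andP[_ hi] _].
  apply: H; lia.
have h2 : 1 <= \prod_(b <= i < N) X i.
  rewrite big_nat_cond; apply: prod_ge1 => i /andP[/andP[_ hi] _].
  apply: H; lia.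
have h3 : 1 <= \prod_(a <= i < b) X i.
  rewrite big_nat_cond; apply: prod_ge1 => i /andP[/andP[_ hi] _].
  apply: H; lia.
exact: le3.
Qed.

Lemma tel_aux (b D : nat) : (0 < b)%N ->
  \prod_(s < D) ((b + s).+1%:R / (b + s)%:R : rat) = (b + D)%:R / b%:R.
Proof.
move=> hb; elim: D => [|D IH].
  by rewrite big_ord0 addn0 divff // pnatr_eq0 -lt0n.
rewrite big_ord_recr /= IH addnS.
have h1 : (b + D)%:R != 0 :> rat by rewrite pnatr_eq0; lia.
have h2 : b%:R != 0 :> rat by rewrite pnatr_eq0; lia.
field; rewrite -?natrD ?pnatr_eq0; lia.
Qed.

Lemma tel (a L D : nat) : (0 < a)%N ->
  \prod_(0 <= s < L) (1 + D%:R / (a + s)%:R : rat)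
  = \prod_(s < D) ((a + L + s)%:R / (a + s)%:R).
Proof.
move=> ha; elim: L => [|L IH].
  rewrite big_geq // big1 // => s _; rewrite addn0 divff // pnatr_eq0; lia.
rewrite big_nat_recr //= IH.
have -> : \prod_(s < D) ((a + L.+1 + s)%:R / (a + s)%:R : rat) =
   \prod_(s < D) (((a + L + s)%:R / (a + s)%:R) * ((a + L + s).+1%:R / (a + L + s)%:R)).
  apply: eq_bigr => s _.
  have h1 : (a + L + s)%:R != 0 :> rat by rewrite pnatr_eq0; lia.
  have h2 : (a + s)%:R != 0 :> rat by rewrite pnatr_eq0; lia.
  have -> : (a + L.+1 + s = (a + L + s).+1)%N by lia.
  field; rewrite -?natrD ?pnatr_eq0 ?mulf_neq0 //; lia.
rewrite [RHS]big_split /= tel_aux; last lia.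
congr (_ * _).
have h1 : (a + L)%:R != 0 :> rat by rewrite pnatr_eq0; lia.
rewrite natrD; field; rewrite -?natrD ?pnatr_eq0 ?mulf_neq0 //; lia.
Qed.

Lemma frac_le (x y u v : nat) : (0 < y)%N -> (0 < v)%N -> (x * v <= u * y)%N ->
  x%:R / y%:R <= u%:R / v%:R :> rat.
Proof.
move=> hy hv h.
rewrite ler_pdivrMr ?ltr0n // mulrAC ler_pdivlMr ?ltr0n //.
by rewrite -!natrM ler_nat.
Qed.

Lemma tel_ge (a L D : nat) : (0 < a)%N ->
  ((a + L)%:R / (a + D)%:R) ^+ D <= \prod_(0 <= s < L) (1 + D%:R / (a + s)%:R : rat).
Proof.
move=> ha; rewrite tel //.
have -> : ((a + L)%:R / (a + D)%:R) ^+ D = \prod_(s < D) ((a + L)%:R / (a + D)%:R : rat).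
  by rewrite prodr_const card_ord.
apply: ler_prod => s _.
apply/andP; split; first by apply: divr_ge0.
apply: frac_le; try lia.
have hs := ltn_ord s.
nia.
Qed.

Lemma row_bound (g : nat -> rat) (a L D : nat) : (0 < a)%N ->
  (forall s, (s < L)%N -> 1 + D%:R / (a + s)%:R <= g s) ->
  ((a + L)%:R / (a + D)%:R) ^+ D <= \prod_(0 <= s < L) g s.
Proof.
move=> ha H; have T := tel_ge a L D ha; apply: (le_trans T).
rewrite big_nat_cond [X in _ <= X]big_nat_cond.
apply: ler_prod => s /andP[/andP[_ hs] _]; apply/andP; split; last exact: H.
by apply: addr_ge0 => //; apply: divr_ge0.
Qed.

Lemma final_ineq (r C n : nat) : (0 < C)%N -> (C ^ n.+1 < r)%N ->
  (r ^ n)%:R < (r%:R / C%:R : rat) ^+ n.+1.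
Proof.
move=> hC hr.
rewrite expr_div_n ltr_pdivlMr; last by rewrite exprn_gt0 ?ltr0n.
rewrite -!natrX -natrM ltr_nat [(r ^ n.+1)%N]expnS [(r * _)%N]mulnC ltn_pmul2l //.
rewrite expn_gt0; lia.
Qed.

Ltac cases := repeat (simpl; match goal with
  | |- context [if ?b then _ else _] =>
      lazymatch b with true => fail | false => fail | _ => case: (boolP b) => ? end
  | |- context [nat_of_bool ?b] =>
      lazymatch b with true => fail | false => fail | _ => case: (boolP b) => ? end
  end).

Lemma fw1 t r (k i j : nat) : (2 < r)%N -> (k < r)%N -> (i < j)%N -> (j < ambient_dim t r)%N ->
  fundw t r k i - fundw t r k j = ((i <= k)%N && (k < j)%N)%:R.
Proof.
move=> hr hk hij hj; rewrite /fundw; case: t hj => /= hj; cases; rewrite /=; try lia; lra.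
Qed.

Lemma fw2 t r (k i j : nat) : t <> TA -> (2 < r)%N -> (k < r)%N -> (i < j)%N -> (j < r)%N ->
  0 <= fundw t r k i + fundw t r k j.
Proof.
move=> ht hr hk hij hj; rewrite /fundw; case: t ht => ht /=; try (exfalso; exact: (ht erefl)); cases; rewrite /=; try lia; lra.
Qed.

Lemma fw3 t r (k i j : nat) : t <> TA -> (2 < r)%N -> k = r.-1 -> (i < j)%N -> (j < r)%N ->
  1 <= fundw t r k i + fundw t r k j.
Proof.
move=> ht hr hk hij hj; rewrite /fundw; case: t ht => ht /=; try (exfalso; exact: (ht erefl)); cases; rewrite /=; try lia; lra.
Qed.

Lemma fw4 t r (k i j : nat) : t <> TA -> (2 < r)%N -> (k < r)%N -> (i < j)%N -> (j.+2 <= r)%N -> (i <= k)%N ->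
  1 <= fundw t r k i + fundw t r k j.
Proof.
move=> ht hr hk hij hj hik; rewrite /fundw; case: t ht => ht /=; try (exfalso; exact: (ht erefl)); cases; rewrite /=; try lia; lra.
Qed.

Lemma fw5 t r (k x : nat) : (2 < r)%N -> (k < r)%N -> (x < r)%N ->
  fundw t r k x <= (x <= k)%N%:R.
Proof.
move=> hr hk hx; rewrite /fundw; case: t => /=; cases; rewrite /=; try lia; lra.
Qed.

Lemma fw6 t r (k x : nat) : t <> TA -> t <> TD -> (2 < r)%N -> (k < r)%N -> (x < r)%N ->
  0 <= fundw t r k x /\ (k = r.-1 -> 0 < fundw t r k x).
Proof.
move=> ht ht' hr hk hx; rewrite /fundw; case: t ht ht' => ht ht' /=; try (exfalso; exact: (ht erefl)); try (exfalso; exact: (ht' erefl)); cases; rewrite /=; split; try lia; try lra.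

Qed.

Definition mroot (i j : nat) : vec := fun x => eps i x - eps j x.
Definition proot (i j : nat) : vec := fun x => eps i x + eps j x.

Lemma sum_eps N (u : vec) i : (i < N)%N -> \sum_(x < N) u x * eps i x = u i.
Proof.
move=> hi; rewrite (bigD1 (Ordinal hi)) //= /eps eqxx mulr1 big1 ?addr0 // => x hx.
have -> : (nat_of_ord x == i) = false.
  apply/negP => /eqP e; move/negP: hx; apply; apply/eqP/val_inj => /=; exact: e.
by rewrite mulr0.
Qed.

Lemma dot_m t r u i j : (i < ambient_dim t r)%N -> (j < ambient_dim t r)%N ->
  dotv t r u (mroot i j) = u i - u j.
Proof.
move=> hi hj; rewrite /dotv /mroot.
under eq_bigr do rewrite mulrBr.
by rewrite sumrB !sum_eps.
Qed.

Lemma dot_p t r u i j : (i < ambient_dim t r)%N -> (j < ambient_dim t r)%N ->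
  dotv t r u (proot i j) = u i + u j.
Proof.
move=> hi hj; rewrite /dotv /proot.
under eq_bigr do rewrite mulrDr.
by rewrite big_split /= !sum_eps.
Qed.

Lemma dot_e t r u i : (i < ambient_dim t r)%N -> dotv t r u (eps i) = u i.
Proof. by move=> hi; rewrite /dotv sum_eps. Qed.

Lemma dot_2e t r u i : (i < ambient_dim t r)%N ->
  dotv t r u (fun x => 2 * eps i x) = 2 * u i.
Proof.
move=> hi; rewrite /dotv.
under eq_bigr do rewrite mulrCA.
by rewrite -mulr_sumr sum_eps.
Qed.

Lemma lin t r (lam : 'I_r -> nat) al :
  dotv t r (weightv t (fun k => (lam k).+1)) al =
  dotv t r (weightv t lam) al + dotv t r (weightv t (fun _ : 'I_r => 1%N)) al.
Proof.
rewrite /dotv -big_split; apply: eq_bigr => x _ /=; rewrite -mulrDl; congr (_ * _).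
rewrite /weightv -big_split; apply: eq_bigr => k _ /=.
by rewrite -mulrDl -natrD addn1.
Qed.

Definition fac t r (lam : 'I_r -> nat) (al : vec) : rat :=
  dotv t r (weightv t (fun k => (lam k).+1)) al
  / dotv t r (weightv t (fun _ : 'I_r => 1%N)) al.

Lemma fac_ge1 t r lam al : 0 <= dotv t r (weightv t lam) al ->
  0 < dotv t r (weightv t (fun _ : 'I_r => 1%N)) al -> 1 <= fac t r lam al.
Proof.
move=> hL hP; rewrite /fac lin ler_pdivlMr // mul1r; lra.
Qed.

Lemma fac_ge t r lam al (D h : rat) : 0 <= D -> D <= dotv t r (weightv t lam) al ->
  0 < dotv t r (weightv t (fun _ : 'I_r => 1%N)) al ->
  dotv t r (weightv t (fun _ : 'I_r => 1%N)) al <= h ->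
  1 + D / h <= fac t r lam al.
Proof.
move=> hD hL hP hh; rewrite /fac lin.
set L := dotv _ _ _ _ in hL *; set P := dotv _ _ _ _ in hP hh *.
have hh0 : 0 < h by lra.
rewrite mulrDl divff ?gt_eqF //.
have e1 : D / h <= D / P by apply: ler_wpM2l => //; rewrite lef_pV2 ?posrE //.
have e2 : D / P <= L / P by apply: ler_wpM2r => //; rewrite invr_ge0; lra.
lra.
Qed.

Lemma amb t r : t <> TA -> ambient_dim t r = r.
Proof. by case: t. Qed.

Lemma cnt r i j : (i <= j)%N -> (j <= r)%N ->
  \sum_(k < r) ((i <= k)%N && (k < j)%N)%:R = (j - i)%:R :> rat.
Proof.
move=> hij hjr.
set f := fun k : nat => ((i <= k)%N && (k < j)%N)%:R : rat.
rewrite -(big_mkord xpredT f).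
rewrite (big_cat_nat (leq0n i) (leq_trans hij hjr)) (big_cat_nat hij hjr) /=.
have A : \sum_(0 <= k < i) f k = 0.
  by rewrite big_nat_cond; apply: big1 => k /andP[/andP[_ hk] _]; rewrite /f; have -> : (i <= k)%N = false by lia.
have L : \sum_(j <= k < r) f k = 0.
  by rewrite big_nat_cond; apply: big1 => k /andP[/andP[hk _] _]; rewrite /f (_ : (k < j)%N = false) ?andbF //; lia.
have M : \sum_(i <= k < j) f k = (j - i)%:R.
  rewrite big_nat_cond (eq_bigr (fun _ => 1)); first by rewrite -big_nat_cond sumr_const_nat.
  by move=> k /andP[/andP[hk1 hk2] _]; rewrite /f; have -> : ((i <= k)%N && (k < j)%N) = true by lia.
by rewrite A L M add0r addr0.
Qed.

Lemma wv_m t r (c : 'I_r -> nat) i j : (2 < r)%N -> (i < j)%N -> (j < ambient_dim t r)%N ->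
  dotv t r (weightv t c) (mroot i j) =
  \sum_(k < r) (c k)%:R * ((i <= k)%N && (k < j)%N)%:R.
Proof.
move=> hr hij hj; rewrite dot_m; [|lia|lia].
rewrite /weightv -sumrB; apply: eq_bigr => k _; rewrite -mulrBr fw1 //.
Qed.

Lemma wv_p t r (c : 'I_r -> nat) i j : t <> TA -> (i < j)%N -> (j < r)%N ->
  dotv t r (weightv t c) (proot i j) =
  \sum_(k < r) (c k)%:R * (fundw t r k i + fundw t r k j).
Proof.
move=> ht hij hj; rewrite dot_p ?amb //; try lia.
rewrite /weightv -big_split; apply: eq_bigr => k _; by rewrite mulrDr.
Qed.

Lemma sum_ge_term r (F : 'I_r -> rat) (k0 : 'I_r) :
  (forall k, 0 <= F k) -> F k0 <= \sum_(k < r) F k.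
Proof.
move=> H; rewrite (bigD1 k0) //= lerDl; apply: sumr_ge0 => k _; exact: H.
Qed.

Lemma sum_ge r (F : 'I_r -> rat) (k0 : 'I_r) x :
  (forall k, 0 <= F k) -> x <= F k0 -> x <= \sum_(k < r) F k.
Proof. move=> H h; have T := sum_ge_term _ _ k0 H; apply: (le_trans h T). Qed.

Lemma sum_gt r (F : 'I_r -> rat) (k0 : 'I_r) x :
  (forall k, 0 <= F k) -> x < F k0 -> x < \sum_(k < r) F k.
Proof. move=> H h; have T := sum_ge_term _ _ k0 H; apply: (lt_le_trans h T). Qed.

Lemma m_ge t r (c : 'I_r -> nat) i j (k0 : 'I_r) : (2 < r)%N -> (i <= k0)%N -> (k0 < j)%N ->
  (j < ambient_dim t r)%N ->
  (c k0)%:R <= dotv t r (weightv t c) (mroot i j).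
Proof.
move=> hr h1 h2 hj; rewrite wv_m //; last lia.
apply: (sum_ge _ _ k0); last by rewrite h1 h2 mulr1.
move=> k; apply: mulr_ge0; exact: ler0n.
Qed.

Lemma m_ge0 t r (c : 'I_r -> nat) i j : (2 < r)%N -> (i < j)%N -> (j < ambient_dim t r)%N ->
  0 <= dotv t r (weightv t c) (mroot i j).
Proof.
move=> hr h1 hj; rewrite wv_m //; apply: sumr_ge0 => k _; apply: mulr_ge0; exact: ler0n.
Qed.

Lemma m_rho t r i j : (2 < r)%N -> (i < j)%N -> (j < ambient_dim t r)%N -> (j <= r)%N ->
  dotv t r (weightv t (fun _ : 'I_r => 1%N)) (mroot i j) = (j - i)%:R.
Proof.
move=> hr h1 hj hjr; rewrite wv_m //.
under eq_bigr do rewrite mul1r.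
apply: cnt => //; lia.
Qed.

Lemma p_ge t r (c : 'I_r -> nat) i j (k0 : 'I_r) : t <> TA -> (2 < r)%N -> (i < j)%N ->
  (j.+2 <= r)%N -> (i <= k0)%N ->
  (c k0)%:R <= dotv t r (weightv t c) (proot i j).
Proof.
move=> ht hr h1 hj hk; rewrite wv_p //; last lia.
apply: (sum_ge _ _ k0).
  move=> k; apply: mulr_ge0; first exact: ler0n.
  apply: fw2 => //; lia.
rewrite -[X in X <= _]mulr1; apply: ler_wpM2l; first exact: ler0n.
apply: fw4 => //; lia.
Qed.

Lemma p_ge0 t r (c : 'I_r -> nat) i j : t <> TA -> (2 < r)%N -> (i < j)%N -> (j < r)%N ->
  0 <= dotv t r (weightv t c) (proot i j).
Proof.
move=> ht hr h1 hj; rewrite wv_p //; apply: sumr_ge0 => k _; apply: mulr_ge0; first exact: ler0n.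
apply: fw2 => //; lia.
Qed.

Lemma p_rho_pos t r i j : t <> TA -> (2 < r)%N -> (i < j)%N -> (j < r)%N ->
  0 < dotv t r (weightv t (fun _ : 'I_r => 1%N)) (proot i j).
Proof.
move=> ht hr h1 hj; rewrite wv_p //.
have hk : (r.-1 < r)%N by lia.
apply: (sum_gt _ _ (Ordinal hk)).
  move=> k; rewrite mul1r; apply: fw2 => //; lia.
rewrite mul1r; have T := fw3 _ _ _ _ _ ht hr (erefl _) h1 hj; lra.
Qed.

Lemma p_rho_le t r i j : t <> TA -> (2 < r)%N -> (i < j)%N -> (j < r)%N ->
  dotv t r (weightv t (fun _ : 'I_r => 1%N)) (proot i j) <= ((r - i) + (r - j))%:R.
Proof.
move=> ht hr h1 hj; rewrite wv_p //.
rewrite natrD -(cnt r i r) ?leqnn -?(cnt r j r) ?leqnn; try lia.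
rewrite -big_split; apply: ler_sum => k _; rewrite mul1r.
have hk := ltn_ord k.
rewrite hk !andbT; apply: lerD.
  exact: (fw5 t r k i hr hk (ltn_trans h1 hj)).
exact: (fw5 t r k j hr hk hj).
Qed.

Lemma e_okB r (c : 'I_r -> nat) i : (2 < r)%N -> (i < r)%N ->
  0 <= dotv TB r (weightv TB c) (eps i) /\ 0 < dotv TB r (weightv TB (fun _ : 'I_r => 1%N)) (eps i).
Proof.
move=> hr hi; rewrite !dot_e //; split.
  apply: sumr_ge0 => k _; apply: mulr_ge0; first exact: ler0n.
  by case: (fw6 TB r k i) => //.
have hk : (r.-1 < r)%N by lia.
apply: (sum_gt _ _ (Ordinal hk)).
  move=> k; rewrite mul1r; by case: (fw6 TB r k i) => //.
by rewrite mul1r; case: (fw6 TB r (Ordinal hk) i) => // _; apply.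
Qed.

Lemma e_okC r (c : 'I_r -> nat) i : (2 < r)%N -> (i < r)%N ->
  0 <= dotv TC r (weightv TC c) (fun x => 2 * eps i x) /\
  0 < dotv TC r (weightv TC (fun _ : 'I_r => 1%N)) (fun x => 2 * eps i x).
Proof.
move=> hr hi; rewrite !dot_2e //; split.
  apply: mulr_ge0 => //; apply: sumr_ge0 => k _; apply: mulr_ge0; first exact: ler0n.
  by case: (fw6 TC r k i) => //.
apply: mulr_gt0 => //.
have hk : (r.-1 < r)%N by lia.
apply: (sum_gt _ _ (Ordinal hk)).
  move=> k; rewrite mul1r; by case: (fw6 TC r k i) => //.
by rewrite mul1r; case: (fw6 TC r (Ordinal hk) i) => // _; apply.
Qed.

Lemma ijprod N (g : nat -> nat -> rat) :
  \prod_(p <- ijpairs N) g p.1 p.2 =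
  \prod_(0 <= i < N) \prod_(0 <= j < N) (if (i < j)%N then g i j else 1).
Proof.
rewrite /ijpairs big_allpairs_dep /=.
have -> : iota 0 N = index_iota 0 N by rewrite /index_iota subn0.
apply: eq_big_nat => i /andP[_ hi].
have E1 : \prod_(0 <= j < i.+1) (if (i < j)%N then g i j else 1) = 1.
  rewrite big_nat_cond; apply: big1 => j /andP[/andP[_ hj] _]; rewrite ifF //; lia.
rewrite [RHS](big_cat_nat (leq0n i.+1) hi) /= E1 mul1r.
have -> : iota i.+1 (N - i.+1) = index_iota i.+1 N by []. 
rewrite big_nat_cond [RHS]big_nat_cond; apply: eq_bigr => j /andP[/andP[hj _] _].
by rewrite hj.
Qed.

Definition Hm t r (lam : 'I_r -> nat) i j := if (i < j)%N then fac t r lam (mroot i j) else 1.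
Definition Hp t r (lam : 'I_r -> nat) i j := if (i < j)%N then fac t r lam (proot i j) else 1.
Definition Qm t r lam := \prod_(0 <= i < ambient_dim t r) \prod_(0 <= j < ambient_dim t r) Hm t r lam i j.
Definition Qp t r lam := \prod_(0 <= i < ambient_dim t r) \prod_(0 <= j < ambient_dim t r) Hp t r lam i j.

Definition rest t r : seq vec :=
  (if t is TA then [::] else [seq (fun x => eps p.1 x + eps p.2 x) | p <- ijpairs (ambient_dim t r)])
  ++ (match t with
      | TB => [seq eps i | i <- iota 0 r]
      | TC => [seq (fun x => 2 * eps i x) | i <- iota 0 r]
      | _ => [::]
      end).

Lemma wd_eq t r lam : weyl_dim t lam =
  Qm t r lam * \prod_(al <- rest t r) fac t r lam al.
Proof.
rewrite /weyl_dim /posroots big_cat big_map /Qm /Hm -ijprod //.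
Qed.

Lemma prod2_ge1 N (H : nat -> nat -> rat) :
  (forall i j, (i < N)%N -> (j < N)%N -> 1 <= H i j) ->
  1 <= \prod_(0 <= i < N) \prod_(0 <= j < N) H i j.
Proof.
move=> HH; rewrite big_nat_cond; apply: prod_ge1 => i /andP[/andP[_ hi] _].
rewrite big_nat_cond; apply: prod_ge1 => j /andP[/andP[_ hj] _].
exact: HH.
Qed.

Lemma Hm_ge1 t r lam i j : (2 < r)%N -> (j < ambient_dim t r)%N -> 1 <= Hm t r lam i j.
Proof.
move=> hr hj; rewrite /Hm; case: ifP => // hij.
apply: fac_ge1; first by apply: m_ge0.
rewrite m_rho //; first by rewrite ltr0n; lia.
by case: t hj => /=; lia.
Qed.

Lemma Hp_ge1 t r lam i j : t <> TA -> (2 < r)%N -> (j < r)%N -> 1 <= Hp t r lam i j.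
Proof.
move=> ht hr hj; rewrite /Hp; case: ifP => // hij.
apply: fac_ge1; first by apply: p_ge0.
by apply: p_rho_pos.
Qed.

Lemma Qm_ge1 t r lam : (2 < r)%N -> 1 <= Qm t r lam.
Proof. move=> hr; apply: prod2_ge1 => i j _ hj; exact: Hm_ge1. Qed.

Lemma Qp_ge1 t r lam : t <> TA -> (2 < r)%N -> 1 <= Qp t r lam.
Proof. move=> ht hr; apply: prod2_ge1 => i j _ hj; apply: Hp_ge1 => //; by rewrite -(amb t r ht). Qed.

Lemma extra_ge1 t r lam : (2 < r)%N ->
  1 <= \prod_(al <- match t with
      | TB => [seq eps i | i <- iota 0 r]
      | TC => [seq (fun x => 2 * eps i x) | i <- iota 0 r]
      | _ => [::]
      end) fac t r lam al.
Proof.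
move=> hr; case: t; rewrite ?big_nil // big_map big_seq; apply: prod_ge1 => i;
  rewrite mem_iota add0n => /andP[_ hi]; apply: fac_ge1.
- by case: (e_okB r lam i hr hi).
- by case: (e_okB r (fun _ => 1%N) i hr hi).
- by case: (e_okC r lam i hr hi).
- by case: (e_okC r (fun _ => 1%N) i hr hi).
Qed.

Lemma one_le_mul (x y : rat) : 1 <= x -> 1 <= y -> 1 <= x * y.
Proof. move=> hx hy; nra. Qed.

Lemma dim_ge_m t r lam : (2 < r)%N -> Qm t r lam <= weyl_dim t lam.
Proof.
move=> hr; rewrite wd_eq; apply: ler_peMr; first by have := Qm_ge1 t r lam hr; lra.
rewrite /rest big_cat /=.
have h2 := extra_ge1 t r lam hr.
case: t h2 => h2; rewrite /= ?big_nil ?mul1r //; move: h2; rewrite ?big_map => h2;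
  rewrite ?big_map; apply: one_le_mul => //;
  match goal with |- context [fac ?t _ _ _] =>
    have := Qp_ge1 t r lam (ltac:(done)) hr; rewrite /Qp /Hp -ijprod /proot //= end.
Qed.

Lemma dim_ge_p t r lam : t <> TA -> (2 < r)%N -> Qp t r lam <= weyl_dim t lam.
Proof.
move=> ht hr; rewrite wd_eq.
have hm := Qm_ge1 t r lam hr.
have hp := Qp_ge1 t r lam ht hr.
have h2 := extra_ge1 t r lam hr.
have E : \prod_(al <- rest t r) fac t r lam al = Qp t r lam *
  \prod_(al <- match t with
      | TB => [seq eps i | i <- iota 0 r]
      | TC => [seq (fun x => 2 * eps i x) | i <- iota 0 r]
      | _ => [::]
      end) fac t r lam al.
{ rewrite /rest big_cat; congr (_ * _).
  case: t ht {hm hp h2} => ht; first by exfalso; exact: ht.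
  all: rewrite /Qp /Hp -ijprod /proot /=.
  all: exact: big_map. }
rewrite E; move: hm hp h2.
set X := Qm _ _ _; set Y := Qp _ _ _; set Z := \prod_(_ <- _) _.
move=> hm hp h2.
have : Y <= Y * Z by apply: ler_peMr => //; lra.
have : Y * Z <= X * (Y * Z) by apply: ler_peMl => //; nra.
lra.
Qed.

Lemma rowsI N (H : nat -> nat -> rat) a b c d :
  (forall i j, (i < N)%N -> (j < N)%N -> 1 <= H i j) ->
  (a <= b)%N -> (b <= N)%N -> (c <= d)%N -> (d <= N)%N ->
  \prod_(a <= i < b) \prod_(c <= j < d) H i j <=
  \prod_(0 <= i < N) \prod_(0 <= j < N) H i j.
Proof.
move=> HH hab hb hcd hd.
have T : \prod_(a <= i < b) \prod_(c <= j < d) H i j <= \prod_(a <= i < b) \prod_(0 <= j < N) H i j.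
  rewrite big_nat_cond [X in _ <= X]big_nat_cond; apply: ler_prod => i /andP[/andP[h1 h2] _].
  apply/andP; split.
    rewrite big_nat_cond; apply: prod_ge0 => j /andP[/andP[_ hj] _].
    have := HH i j ltac:(lia) ltac:(lia); lra.
  apply: prod_sub => // j hj; apply: HH => //; lia.
apply: (le_trans T); apply: prod_sub => // i hi.
rewrite big_nat_cond; apply: prod_ge1 => j /andP[/andP[_ hj] _]; exact: HH.
Qed.

Lemma rowsJ N (H : nat -> nat -> rat) a b c d :
  (forall i j, (i < N)%N -> (j < N)%N -> 1 <= H i j) ->
  (a <= b)%N -> (b <= N)%N -> (c <= d)%N -> (d <= N)%N ->
  \prod_(c <= j < d) \prod_(a <= i < b) H i j <=
  \prod_(0 <= i < N) \prod_(0 <= j < N) H i j.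
Proof.
move=> HH hab hb hcd hd; rewrite (exchange_big_nat _ 0 N 0 N).
apply: (rowsI N (fun j i => H i j)) => // i j hi hj; exact: HH.
Qed.

Lemma shift (F : nat -> rat) c d :
  \prod_(c <= j < d) F j = \prod_(0 <= s < d - c) F (c + s)%N.
Proof.
have := big_addn 0 d c xpredT F (op := *%R) (idx := 1); rewrite add0n => ->.
by apply: eq_bigr => s _; rewrite addnC.
Qed.

Lemma revp (F : nat -> rat) K :
  \prod_(0 <= i < K) F i = \prod_(0 <= s < K) F (K - s.+1)%N.
Proof. by rewrite big_nat_rev /= add0n. Qed.

Lemma prodrows (R : nat -> rat) a b X : 0 <= X ->
  (forall i, (a <= i)%N -> (i < b)%N -> X <= R i) ->
  X ^+ (b - a) <= \prod_(a <= i < b) R i.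
Proof.
move=> hX H; rewrite -prodr_const_nat big_nat_cond [X in _ <= X]big_nat_cond.
apply: ler_prod => i /andP[/andP[h1 h2] _]; rewrite hX /=; exact: H.
Qed.

Lemma Hm_bound t r lam i j (k : 'I_r) D : (2 < r)%N -> (i <= k)%N -> (k < j)%N ->
  (j < ambient_dim t r)%N -> (D <= lam k)%N ->
  1 + D%:R / (j - i)%:R <= Hm t r lam i j.
Proof.
move=> hr h1 h2 hj hD; rewrite /Hm ifT; last lia.
apply: fac_ge; first exact: ler0n.
- apply: le_trans (m_ge t r lam i j k hr h1 h2 hj); by rewrite ler_nat.
- rewrite m_rho //; [rewrite ltr0n; lia | lia | by case: t hj => /=; lia].
- rewrite m_rho //; [lia | by case: t hj => /=; lia].
Qed.

Lemma Hp_bound t r lam i j (k : 'I_r) D : t <> TA -> (2 < r)%N -> (i < j)%N ->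
  (j.+2 <= r)%N -> (i <= k)%N -> (D <= lam k)%N ->
  1 + D%:R / ((r - i) + (r - j))%:R <= Hp t r lam i j.
Proof.
move=> ht hr h1 hj hk hD; rewrite /Hp ifT //.
apply: fac_ge; first exact: ler0n.
- apply: le_trans (p_ge t r lam i j k ht hr h1 hj hk); by rewrite ler_nat.
- apply: p_rho_pos => //; lia.
- apply: p_rho_le => //; lia.
Qed.

Lemma le_tr (x y z : rat) : y <= z -> x <= y -> x <= z.
Proof. move=> h1 h2; exact: le_trans h2 h1. Qed.

Lemma rN t r : (r <= ambient_dim t r)%N /\ (ambient_dim t r <= r.+1)%N.
Proof. by case: t => /=; lia. Qed.

Lemma caseL t r lam (k : 'I_r) n C : (2 < r)%N -> (n <= k)%N ->
  (k.*2 <= ambient_dim t r)%N -> (k.+1 < ambient_dim t r)%N -> (1 <= lam k)%N ->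
  (2 * n + 4 <= C)%N ->
  (r%:R / C%:R) ^+ n.+1 <= weyl_dim t lam.
Proof.
move=> hr hn h2k hkN hl hC.
have [hrN hNr] := rN t r.
set N := ambient_dim t r in h2k hkN hrN hNr *.
apply: le_tr; first exact: (dim_ge_m t r lam hr).
rewrite /Qm -/N.
apply: le_tr; first (apply: (rowsI N (Hm t r lam) (k - n) k.+1 k.+1 N); try lia;
  by move=> i j _ hj; apply: Hm_ge1).
have e : n.+1 = (k.+1 - (k - n))%N by lia.
rewrite [in X in X <= _]e; apply: prodrows; first by apply: divr_ge0.
move=> i h1 h2; rewrite shift.
apply: le_tr; first (apply: (row_bound _ (k.+1 - i) (N - k.+1) 1); first lia).
  2: { rewrite expr1; apply: frac_le; try lia.
  have a1 : (k.+1 - i + 1 <= n + 2)%N by lia.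
  have a2 : (r <= 2 * (N - k))%N by lia.
  have a3 : (N - k <= k.+1 - i + (N - k.+1))%N by lia.
  apply: (leq_trans (leq_mul (leqnn r) a1)).
  apply: (leq_trans (leq_mul a2 (leqnn (n + 2)))).
  apply: (leq_trans _ (leq_mul a3 hC)).
  have -> : (2 * (N - k) * (n + 2) = (N - k) * (2 * n + 4))%N by set M := (N - k)%N; ring.
  exact: leqnn. }
move=> s hs.
have E : (k.+1 + s - i = k.+1 - i + s)%N by lia.
rewrite -E; apply: (Hm_bound t r lam i (k.+1 + s) k 1) => //; lia.
Qed.

Lemma caseU t r lam (k : 'I_r) n C : (2 < r)%N ->
  (ambient_dim t r <= k.*2)%N -> (k + n + 1 < ambient_dim t r)%N -> (1 <= lam k)%N ->
  (2 * n + 4 <= C)%N ->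
  (r%:R / C%:R) ^+ n.+1 <= weyl_dim t lam.
Proof.
move=> hr h2k hkN hl hC.
have [hrN hNr] := rN t r.
set N := ambient_dim t r in h2k hkN hrN hNr *.
apply: le_tr; first exact: (dim_ge_m t r lam hr).
rewrite /Qm -/N.
apply: le_tr; first (apply: (rowsJ N (Hm t r lam) 0 k.+1 k.+1 (k + n + 2)); try lia;
  by move=> i j _ hj; apply: Hm_ge1).
have e : n.+1 = (k + n + 2 - k.+1)%N by lia.
rewrite [in X in X <= _]e; apply: prodrows; first by apply: divr_ge0.
move=> j h1 h2; rewrite revp.
apply: le_tr; first (apply: (row_bound _ (j - k) k.+1 1); first lia).
  2: { rewrite expr1; apply: frac_le; try lia.
  have a1 : (j - k + 1 <= n + 2)%N by lia.
  have a2 : (r <= 2 * k.+1)%N by lia.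
  have a3 : (k.+1 <= j - k + k.+1)%N by lia.
  apply: (leq_trans (leq_mul (leqnn r) a1)).
  apply: (leq_trans (leq_mul a2 (leqnn (n + 2)))).
  apply: (leq_trans _ (leq_mul a3 hC)).
  have -> : (2 * k.+1 * (n + 2) = k.+1 * (2 * n + 4))%N by set M := k.+1; ring.
  exact: leqnn. }
move=> s hs.
have E : (j - (k.+1 - s.+1) = j - k + s)%N by lia.
rewrite -E; apply: (Hm_bound t r lam (k.+1 - s.+1) j k 1) => //; lia.
Qed.

Lemma caseE t r lam (k : 'I_r) n C : t <> TA -> (2 * n + 6 <= r)%N ->
  (r <= k + n + 1)%N -> (1 <= lam k)%N -> (2 * n + 6 <= C)%N ->
  (r%:R / C%:R) ^+ n.+1 <= weyl_dim t lam.
Proof.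
move=> ht hr hk hl hC.
have hr2 : (2 < r)%N by lia.
have hN := amb t r ht.
apply: le_tr; first exact: (dim_ge_p t r lam ht hr2).
rewrite /Qp hN.
apply: le_tr; first (apply: (rowsJ r (Hp t r lam) 0 (r - 2 - n) (r - 2 - n) r.-1); try lia;
  by move=> i j _ hj; apply: Hp_ge1).
have e : n.+1 = (r.-1 - (r - 2 - n))%N by lia.
rewrite [in X in X <= _]e; apply: prodrows; first by apply: divr_ge0.
move=> j h1 h2; rewrite revp.
apply: le_tr; first (apply: (row_bound _ (n + 3 + (r - j)) (r - 2 - n) 1); first lia).
  2: { rewrite expr1; apply: frac_le; try lia.
  have a1 : (n + 3 + (r - j) + 1 <= C)%N by lia.
  have a3 : (r <= n + 3 + (r - j) + (r - 2 - n))%N by lia.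
  exact: (leq_trans (leq_mul (leqnn r) a1) (leq_mul a3 (leqnn C))). }
move=> s hs.
have E : ((r - (r - 2 - n - s.+1)) + (r - j) = n + 3 + (r - j) + s)%N by lia.
rewrite -E; apply: (Hp_bound t r lam (r - 2 - n - s.+1) j k 1) => //; lia.
Qed.

Lemma caseCS t r lam (k : 'I_r) n C : (2 < r)%N -> (k.+1 < ambient_dim t r)%N ->
  (n.+1 <= lam k)%N -> (k + n + 2 <= C)%N ->
  (r%:R / C%:R) ^+ n.+1 <= weyl_dim t lam.
Proof.
move=> hr hkN hl hC.
have [hrN hNr] := rN t r.
set N := ambient_dim t r in hkN hrN hNr *.
apply: le_tr; first exact: (dim_ge_m t r lam hr).
rewrite /Qm -/N.
apply: le_tr; first (apply: (rowsI N (Hm t r lam) 0 1 k.+1 N); try lia;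
  by move=> i j _ hj; apply: Hm_ge1).
rewrite big_nat1 shift.
apply: le_tr; first (apply: (row_bound _ k.+1 (N - k.+1) n.+1); first lia).
  2: { apply: lerXn2r; rewrite ?nnegrE; try (apply: divr_ge0; exact: ler0n).
  apply: frac_le; try lia.
  apply: leq_mul; lia. }
move=> s hs.
have H := Hm_bound t r lam 0 (k.+1 + s) k n.+1 hr (leq0n k) ltac:(lia) ltac:(lia) hl.
by rewrite subn0 in H.
Qed.

Lemma caseCE r lam (k : 'I_r) n C : (2 < r)%N ->
  (n.+1 <= lam k)%N -> (r - k + n + 1 <= C)%N ->
  (r%:R / C%:R) ^+ n.+1 <= weyl_dim TA lam.
Proof.
move=> hr hl hC.
have hk := ltn_ord k.
apply: le_tr; first exact: (dim_ge_m TA r lam hr).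
rewrite /Qm /=.
apply: le_tr; first (apply: (rowsJ r.+1 (Hm TA r lam) 0 k.+1 r r.+1); try lia;
  by move=> i j _ hj; apply: Hm_ge1).
rewrite big_nat1 revp.
apply: le_tr; first (apply: (row_bound _ (r - k) k.+1 n.+1); first lia).
  2: { apply: lerXn2r; rewrite ?nnegrE; try (apply: divr_ge0; exact: ler0n).
  apply: frac_le; try lia.
  apply: leq_mul; lia. }
move=> s hs.
have E : (r - (k.+1 - s.+1) = r - k + s)%N by lia.
rewrite -E; apply: (Hm_bound TA r lam (k.+1 - s.+1) r k n.+1) => //=; lia.
Qed.

Definition LamS (m n : nat) : seq (m.-tuple nat) :=
  map (fun f : {ffun 'I_m -> 'I_n.+1} => mktuple (fun i => nat_of_ord (f i))) (enum {ffun 'I_m -> 'I_n.+1}).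

Lemma inLam m n (a : m.-tuple nat) : (forall i : 'I_m, (tnth a i <= n)%N) -> a \in LamS m n.
Proof.
move=> H; apply/mapP; exists [ffun i => inord (tnth a i)]; first by rewrite mem_enum.
apply: eq_from_tnth => i; rewrite tnth_mktuple ffunE inordK //; exact: H.
Qed.

Definition tup m (f : nat -> nat) : m.-tuple nat := @Tuple m nat (mkseq f m) (introT eqP (size_mkseq f m)).

Lemma nth_tup m f k : nth 0%N (tup m f) k = if (k < m)%N then f k else 0%N.
Proof.
rewrite /tup /=; case: ifP => hk; first by rewrite nth_mkseq.
by rewrite nth_default // size_mkseq; lia.
Qed.

Lemma tnth_tup m f (i : 'I_m) : tnth (tup m f) i = f i.
Proof. by rewrite (tnth_nth 0%N) nth_tup ltn_ord. Qed.

Definition glam {r} (lam : 'I_r -> nat) (x : nat) : nat := odflt 0%N (omap lam (insub x)).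

Lemma glamE r lam (k : 'I_r) : glam lam k = lam k.
Proof. by rewrite /glam valK. Qed.

Lemma glam_out r (lam : 'I_r -> nat) x : (r <= x)%N -> glam lam x = 0%N.
Proof. by move=> h; rewrite /glam insubN // -leqNgt. Qed.

Theorem lemma2p6 (n : nat) (hn : (0 < n)%N) :
  exists (R m : nat) (Lambda : seq (m.-tuple nat)),
  forall (t : classical_type) (r : nat) (lam : 'I_r -> nat),
    (R <= r)%N ->
    @weyl_dim t r lam <= (r ^ n)%:R ->
    if t is TA then
      exists2 a, a \in Lambda & exists2 b, b \in Lambda &
        forall k : 'I_r, lam k = (nth 0 a k + nth 0 b (r.-1 - k))%N
    else
      exists2 a, a \in Lambda & forall k : 'I_r, lam k = nth 0%N a k.
Proof.
pose m := n.+1; pose C := (3 * n + 7)%N.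
exists (C ^ n.+1 + 4 * n + 10)%N, m, (LamS m n).
move=> t r lam hR hdim.
have hrC : (C ^ n.+1 < r)%N by lia.
have hr3 : (2 < r)%N by lia.
have hr6 : (2 * n + 6 <= r)%N by lia.
have K : ~ ((r%:R / C%:R) ^+ n.+1 <= weyl_dim t lam).
  move=> h; have := final_ineq r C n ltac:(lia) hrC; lra.
have [hrN hNr] := rN t r.
have Zbcd : t <> TA -> forall k : 'I_r, (m <= k)%N -> lam k = 0%N.
  move=> ht k hk; case: (posnP (lam k)) => // hl; exfalso; apply: K.
  rewrite amb // in hrN hNr.
  have hk' := ltn_ord k.
  case: (leqP k.*2 r) => h2.
    apply: (caseL t r lam k n C) => //; rewrite ?amb //; lia.
  case: (ltnP (k + n + 1) r) => h3.
    apply: (caseU t r lam k n C) => //; rewrite ?amb //; lia.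
  apply: (caseE t r lam k n C) => //; lia.
have ZA : t = TA -> forall k : 'I_r, (m <= k)%N -> (k + m < r)%N -> lam k = 0%N.
  move=> ht k hk hk2; subst t; case: (posnP (lam k)) => // hl; exfalso; apply: K.
  case: (leqP k.*2 r.+1) => h2.
    apply: (caseL TA r lam k n C) => //=; lia.
  apply: (caseU TA r lam k n C) => //=; lia.
have Bd : forall k : 'I_r, (lam k <= n)%N.
{ move=> k; rewrite leqNgt; apply/negP => hl.
  have hk' := ltn_ord k.
  case: (ltnP k m) => hkm.
    apply: K; apply: (caseCS t r lam k n C) => //; lia.
  case: t hdim K Zbcd ZA hrN hNr => hdim K Zbcd ZA hrN hNr.
  - case: (ltnP (k + m) r) => hkr.
      by move: hl; rewrite (ZA erefl k hkm hkr).
    apply: K; apply: (caseCE r lam k n C) => //; lia.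
  all: by move: hl; rewrite (Zbcd ltac:(done) k hkm). }
have Bg : forall x, (glam lam x <= n)%N.
  move=> x; case: (ltnP x r) => hx.
    by rewrite -[x]/(nat_of_ord (Ordinal hx)) glamE.
  by rewrite glam_out.
case: t hdim K Zbcd ZA hrN hNr => hdim K Zbcd ZA hrN hNr.
- exists (tup m (glam lam)).
    by apply: inLam => i; rewrite tnth_tup.
  exists (tup m (fun i => glam lam (r.-1 - i))).
    by apply: inLam => i; rewrite tnth_tup.
  move=> k; have hk := ltn_ord k.
  rewrite !nth_tup.
  case: (ltnP k m) => h1.
    rewrite glamE ifF; [lia | lia].
  case: (ltnP (r.-1 - k) m) => h2.
    have -> : (r.-1 - (r.-1 - k) = k)%N by lia.
    by rewrite glamE.
  rewrite (ZA erefl k h1); lia.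
all: exists (tup m (glam lam)); [by apply: inLam => i; rewrite tnth_tup |].
all: move=> k; rewrite nth_tup; case: (ltnP k m) => h1; [by rewrite glamE | by rewrite (Zbcd ltac:(done) k h1)].
Qed.
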